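(* Let $k\ge k_0$ ($k_0$ a sufficiently large constant) and $\beta\geq k\ln 2-10\ln k$. Let $a$ be a clause on $k$ distinct variables $\partial a$, where each $x\in\partial a$ appears in $a$ either positively ($x\in\partial_1 a$) or negatively ($x\in\partial_{-1}a$). Let $(\nu_{x\to a})_{x\in\partial a}$ be probability distributions on $\{-1,1\}$, set $\partial_{\rm good}a=\{x\in\partial a:\nu_{x\to a}(1)\geq1-e^{-k\beta/2}\}$, and for $x\in\partial a$, $s\in\{\pm1\}$ define $$\hat\nu_{a\to x}(s)=\frac{\sum_{s_a\in\{\pm1\}^{\partial a}}\mathbf 1\{s_x=s\}\psi_{a,\beta}(s_a)\prod_{y\in\partial a\setminus\{x\}}\nu_{y\to a}(s_y)}{\sum_{s_a\in\{\pm1\}^{\partial a}}\psi_{a,\beta}(s_a)\prod_{y\in\partial a\setminus\{x\}}\nu_{y\to a}(s_y)}.$$ Then for every $x\in\partial a$: (a) $e^{-\beta}\leq\hat\nu_{a\to x}(1)/\hat\nu_{a\to x}(-1)\leq e^{\beta}$; (b) if $x\in\partial_1a$, then $\hat\nu_{a\to x}(1)/\hat\nu_{a\to x}(-1)\geq1$; (c) if $\partial_1a=\{x\}$ and $\partial_{-1}a\subset\partial_{\rm good}a$, then $\hat\nu_{a\to x}(1)/\hat\nu_{a\to x}(-1)\geq e^{0.99\beta}$; (d) if $p\ge1$ is an integer with $|(\partial_1a\setminus\{x\})\cap\partial_{\rm good}a|\geq p$, then $\hat\nu_{a\to x}(1)/\hat\nu_{a\to x}(-1)\geq\exp(-\e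xp(-pk\beta/3))$.
   Context: For $s_a\in\{\pm1\}^{\partial a}$ (value $1$ = true), the clause weight is $\psi_{a,\beta}(s_a)=e^{-\beta}$ if every literal of $a$ is false under $s_a$ (i.e. $s_y=-1$ for all $y\in\partial_1a$ and $s_y=1$ for all $y\in\partial_{-1}a$), and $\psi_{a,\beta}(s_a)=1$ otherwise. *)

(* Defs.v *)
From Stdlib Require Import Reals Lra List Arith.
Import ListNotations.
Open Scope R_scope.

(* A clause a on k distinct variables, indexed 0..k-1.
   sign y = true  : variable y occurs positively (y in ∂_1 a)
   sign y = false : variable y occurs negatively (y in ∂_{-1} a)
   An assignment s_a ∈ {±1}^{∂a} is a list of k booleans (true = +1 = "true"). *)

Fixpoint assignments (n : nat) : list (list bool) :=
  match n with
  | O => [nil]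
  | S m => flat_map (fun s => [true :: s; false :: s]) (assignments m)
  end.

Definition val (s : list bool) (y : nat) : bool := nth y s false.

Definition all_literals_false (k : nat) (sign : nat -> bool) (s : list bool) : bool :=
  forallb (fun y => Bool.eqb (val s y) (negb (sign y))) (seq 0 k).

Definition psi (beta : R) (k : nat) (sign : nat -> bool) (s : list bool) : R :=
  if all_literals_false k sign s then exp (- beta) else 1.

(* nu y : R is nu_{y->a}(1); nu_{y->a}(-1) = 1 - nu y *)
Definition msg (nu : nat -> R) (y : nat) (b : bool) : R :=
  if b then nu y else 1 - nu y.

Definition Rsum (l : list R) : R := fold_right Rplus 0 l.
Definition Rprod (l : list R) : R := fold_right Rmult 1 l.

Definition prod_others (k : nat) (nu : nat -> R) (x : nat) (s : list bool) : R :=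
  Rprod (map (fun y => msg nu y (val s y))
             (filter (fun y => negb (Nat.eqb y x)) (seq 0 k))).

Definition summand beta k sign nu x (s : list bool) : R :=
  psi beta k sign s * prod_others k nu x s.

Definition hatnu_num beta k sign nu x (b : bool) : R :=
  Rsum (map (summand beta k sign nu x)
            (filter (fun s => Bool.eqb (val s x) b) (assignments k))).

Definition hatnu_den beta k sign nu x : R :=
  Rsum (map (summand beta k sign nu x) (assignments k)).

Definition hatnu beta k sign nu x (b : bool) : R :=
  hatnu_num beta k sign nu x b / hatnu_den beta k sign nu x.

Definition good (k : nat) (beta : R) (nu : nat -> R) (y : nat) : Prop :=
  nu y >= 1 - exp (- (INR k * beta / 2)).

Definition goodb (k : nat) (beta : R) (nu : nat -> R) (y : nat) : bool :=
  if Rle_dec (1 - exp (- (INR k * beta / 2))) (nu y) then true else false.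

Definition n_good_pos (k : nat) (beta : R) (sign : nat -> bool) (nu : nat -> R) (x : nat) : nat :=
  length (filter (fun y => andb (andb (negb (Nat.eqb y x)) (sign y)) (goodb k beta nu y)) (seq 0 k)).

(* Main.v *)
Require Import Defs.
From Stdlib Require Import Reals Lra Lia List Arith.
Open Scope R_scope.

Lemma Rsum_app l1 l2 : Rsum (l1 ++ l2) = Rsum l1 + Rsum l2.
Proof. induction l1; simpl; [ring| rewrite IHl1; ring]. Qed.

Lemma Rsum_scal {A} (c : R) (g : A -> R) l :
  Rsum (map (fun s => c * g s) l) = c * Rsum (map g l).
Proof. induction l; simpl; [ring | rewrite IHl; ring]. Qed.

Lemma Rsum_minus {A} (f g : A -> R) l :
  Rsum (map (fun s => f s - g s) l) = Rsum (map f l) - Rsum (map g l).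
Proof. induction l; simpl; [ring | rewrite IHl; ring]. Qed.

Lemma Rsum_ext {A} (f g : A -> R) l : (forall s, f s = g s) ->
  Rsum (map f l) = Rsum (map g l).
Proof. intro H; induction l; simpl; [ring | rewrite IHl, H; ring]. Qed.

Lemma Rsum_filter {A} (p : A -> bool) (G : A -> R) l :
  Rsum (map G (filter p l)) = Rsum (map (fun s => (if p s then 1 else 0) * G s) l).
Proof. induction l; simpl; [ring|]. destruct (p a); simpl; rewrite IHl; ring. Qed.

Lemma Rsum_split {A} (p : A -> bool) (G : A -> R) l :
  Rsum (map G l) = Rsum (map G (filter p l)) + Rsum (map G (filter (fun s => negb (p s)) l)).
Proof. induction l; simpl; [ring|]. destruct (p a); simpl; rewrite IHl; ring. Qed.

Lemma Rsum_assign_S (G : list bool -> R) n :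
  Rsum (map G (assignments (S n))) =
  Rsum (map (fun s => G (true :: s)) (assignments n)) +
  Rsum (map (fun s => G (false :: s)) (assignments n)).
Proof.
  simpl. induction (assignments n); simpl; [ring|]. rewrite IHl. ring.
Qed.

Lemma Rprod_map_S (f : nat -> R) n :
  Rprod (map f (seq 0 (S n))) = f 0%nat * Rprod (map (fun y => f (S y)) (seq 0 n)).
Proof.
  simpl. rewrite <- seq_shift, map_map. reflexivity.
Qed.

Lemma Rprod_ext (f g : nat -> R) l : (forall y, f y = g y) ->
  Rprod (map f l) = Rprod (map g l).
Proof. intro H; induction l; simpl; [ring | rewrite IHl, H; ring]. Qed.

Lemma key (n : nat) : forall (f : nat -> bool -> R),
  Rsum (map (fun s => Rprod (map (fun y => f y (val s y)) (seq 0 n))) (assignments n))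
  = Rprod (map (fun y => f y true + f y false) (seq 0 n)).
Proof.
  induction n; intro f.
  - simpl. unfold Rsum, Rprod; simpl. ring.
  - rewrite Rsum_assign_S.
    set (g := fun y b => f (S y) b).
    rewrite (Rsum_ext _ (fun s => f 0%nat true * Rprod (map (fun y => g y (val s y)) (seq 0 n)))).
    2:{ intro s. rewrite Rprod_map_S. reflexivity. }
    rewrite (Rsum_ext (fun s => Rprod (map (fun y => f y (val (false :: s) y)) (seq 0 (S n))))
                      (fun s => f 0%nat false * Rprod (map (fun y => g y (val s y)) (seq 0 n)))).
    2:{ intro s. rewrite Rprod_map_S. reflexivity. }
    rewrite !Rsum_scal, (IHn g), Rprod_map_S. unfold g. ring.
Qed.

Lemma Rprod_filter (p : nat -> bool) (f : nat -> R) (l : list nat) :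
  Rprod (map f (filter p l)) = Rprod (map (fun y => if p y then f y else 1) l).
Proof. induction l; simpl; [ring|]. destruct (p a); simpl; rewrite IHl; ring. Qed.

Lemma Rprod_mul (f g : nat -> R) (l : list nat) :
  Rprod (map f l) * Rprod (map g l) = Rprod (map (fun y => f y * g y) l).
Proof. induction l; simpl; [unfold Rprod; simpl; ring|]. unfold Rprod in *; simpl; rewrite <- IHl; ring. Qed.

Lemma Rprod_notin (f : nat -> R) (x : nat) (a : R) (l : list nat) : ~ In x l ->
  Rprod (map (fun y => if Nat.eqb y x then a else f y) l) = Rprod (map f l).
Proof.
  induction l; simpl; intro H; [reflexivity|].
  destruct (Nat.eqb_spec a0 x); [exfalso; tauto|]. unfold Rprod in *; simpl; rewrite IHl; tauto.
Qed.

Lemma Rprod_pick (f : nat -> R) (x : nat) (l : list nat) : NoDup l -> In x l ->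
  Rprod (map f l) = f x * Rprod (map (fun y => if Nat.eqb y x then 1 else f y) l).
Proof.
  induction l as [|z l IH]; simpl; intros Hnd Hin; [contradiction|].
  inversion Hnd; subst.
  destruct (Nat.eqb_spec z x).
  - subst. unfold Rprod; simpl. fold (Rprod (map f l)).
    fold (Rprod (map (fun y => if Nat.eqb y x then 1 else f y) l)).
    rewrite Rprod_notin by assumption. ring.
  - destruct Hin as [Hin|Hin]; [congruence|]. unfold Rprod in *; simpl. rewrite (IH H2 Hin). ring.
Qed.

Lemma Rprod_const1 l : Rprod (map (fun _ : nat => 1) l) = 1.
Proof. induction l; simpl; [reflexivity| unfold Rprod in *; simpl; rewrite IHl; ring]. Qed.

Lemma forallb_R (q : nat -> bool) l :
  (if forallb q l then 1 else 0) = Rprod (map (fun y => if q y then 1 else 0) l).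
Proof. induction l; simpl; [reflexivity|]. unfold Rprod in *; simpl. rewrite <- IHl.
  destruct (q a); simpl; [|ring]. destruct (forallb q l); ring. Qed.

Definition Qv k (sign : nat -> bool) nu x :=
  Rprod (map (fun y => if Nat.eqb y x then 1 else msg nu y (negb (sign y))) (seq 0 k)).

Lemma num_formula beta k sign nu x b : (x < k)%nat ->
  hatnu_num beta k sign nu x b =
  1 - (1 - exp (- beta)) * ((if Bool.eqb (negb (sign x)) b then 1 else 0) * Qv k sign nu x).
Proof.
  intro Hx.
  assert (Hin : In x (seq 0 k)) by (apply in_seq; lia).
  unfold hatnu_num. rewrite Rsum_filter.
  set (g1 := fun y c => if Nat.eqb y x then (if Bool.eqb c b then 1 else 0) else msg nu y c).
  set (g2 := fun y c => (if Bool.eqb c (negb (sign y)) then 1 else 0) * g1 y c).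
  rewrite (Rsum_ext _ (fun s => Rprod (map (fun y => g1 y (val s y)) (seq 0 k))
        - (1 - exp (- beta)) * Rprod (map (fun y => g2 y (val s y)) (seq 0 k)))).
  2:{ intro s. unfold summand, psi, prod_others. rewrite Rprod_filter.
      assert (E1 : Rprod (map (fun y => g1 y (val s y)) (seq 0 k)) =
        (if Bool.eqb (val s x) b then 1 else 0) *
        Rprod (map (fun y => if negb (Nat.eqb y x) then msg nu y (val s y) else 1) (seq 0 k))).
      { rewrite (Rprod_pick _ x) by (apply seq_NoDup || assumption).
        unfold g1 at 1. rewrite Nat.eqb_refl. f_equal. apply Rprod_ext. intro y.
        unfold g1. destruct (Nat.eqb y x); reflexivity. }
      assert (E2 : Rprod (map (fun y => g2 y (val s y)) (seq 0 k)) =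
         (if all_literals_false k sign s then 1 else 0) * Rprod (map (fun y => g1 y (val s y)) (seq 0 k))).
      { unfold all_literals_false. rewrite forallb_R, Rprod_mul. reflexivity. }
      rewrite E2, E1. destruct (all_literals_false k sign s); ring. }
  rewrite Rsum_minus, Rsum_scal, !key.
  rewrite (Rprod_ext _ (fun _ => 1)).
  2:{ intro y. unfold g1. destruct (Nat.eqb y x); [destruct b; simpl; ring|unfold msg; ring]. }
  rewrite Rprod_const1.
  rewrite (Rprod_ext _ (fun y => g1 y (negb (sign y)))).
  2:{ intro y. unfold g2. destruct (sign y); simpl; ring. }
  rewrite (Rprod_pick _ x) by (apply seq_NoDup || assumption).
  unfold g1 at 1. rewrite Nat.eqb_refl. unfold Qv. f_equal. f_equal. f_equal.
  apply Rprod_ext. intro y. unfold g1. destruct (Nat.eqb y x); reflexivity.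
Qed.

Lemma den_formula beta k sign nu x :
  hatnu_den beta k sign nu x = hatnu_num beta k sign nu x true + hatnu_num beta k sign nu x false.
Proof.
  unfold hatnu_den, hatnu_num.
  rewrite (Rsum_split (fun s => Bool.eqb (val s x) true)). f_equal. f_equal. f_equal.
  apply filter_ext. intro s. destruct (val s x); reflexivity.
Qed.

Lemma prod01 (f : nat -> R) l : (forall y, In y l -> 0 <= f y <= 1) -> 0 <= Rprod (map f l) <= 1.
Proof.
  induction l; simpl; intro H; unfold Rprod in *; simpl; [lra|].
  specialize (IHl (fun y Hy => H y (or_intror Hy))). specialize (H a (or_introl eq_refl)).
  fold (Rprod (map f l)) in *. split; nra.
Qed.

Lemma prod_bern (f : nat -> R) l eps : (forall y, In y l -> 0 <= f y <= 1 /\ 1 - eps <= f y) ->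
  1 - Rprod (map f l) <= INR (length l) * eps.
Proof.
  induction l as [|a l IHl]; intro H; [unfold Rprod; simpl; lra|].
  change (length (a :: l)) with (S (length l)). rewrite S_INR.
  assert (H1 : forall y, In y l -> 0 <= f y <= 1) by (intros y Hy; apply H; simpl; tauto).
  pose proof (prod01 f l H1).
  specialize (IHl (fun y Hy => H y (or_intror Hy))). specialize (H a (or_introl eq_refl)).
  change (Rprod (map f (a :: l))) with (f a * Rprod (map f l)). nra.
Qed.

Lemma prod_pow (f : nat -> R) (P : nat -> bool) l eps : 0 <= eps <= 1 ->
  (forall y, In y l -> 0 <= f y <= 1) -> (forall y, In y l -> P y = true -> f y <= eps) ->
  Rprod (map f l) <= eps ^ (length (filter P l)).
Proof.
  intro He. induction l; simpl; intros H H'; unfold Rprod in *; simpl; [lra|].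
  assert (H1 : forall y, In y l -> 0 <= f y <= 1) by (intros y Hy; apply H; tauto).
  pose proof (prod01 f l H1). fold (Rprod (map f l)) in *.
  specialize (IHl H1 (fun y Hy => H' y (or_intror Hy))).
  specialize (H a (or_introl eq_refl)). specialize (H' a (or_introl eq_refl)).
  destruct (P a); simpl.
  - specialize (H' eq_refl). apply Rmult_le_compat; lra.
  - nra.
Qed.

Lemma pow_le1' (e : R) n : 0 <= e <= 1 -> e ^ n <= 1.
Proof. intro He; induction n; simpl; [lra|]. assert (0 <= e ^ n) by (apply pow_le; lra). nra. Qed.

Lemma pow_mono_le (e : R) (p n : nat) : 0 <= e <= 1 -> (p <= n)%nat -> e ^ n <= e ^ p.
Proof.
  intros He Hpn. replace n with (p + (n - p))%nat by lia. rewrite pow_add.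
  assert (0 <= e ^ p) by (apply pow_le; lra).
  assert (e ^ (n - p) <= 1) by (apply pow_le1'; lra).
  assert (0 <= e ^ (n - p)) by (apply pow_le; lra). nra.
Qed.

Lemma exp_pow' (t : R) n : exp t ^ n = exp (INR n * t).
Proof.
  induction n as [|n IHn]; [simpl; rewrite Rmult_0_l, exp_0; ring|].
  rewrite S_INR. change (exp t ^ S n) with (exp t * exp t ^ n).
  rewrite IHn, <- exp_plus. f_equal. ring.
Qed.

Lemma ln2_half : 1/2 <= ln 2.
Proof.
  assert (H : exp (1/2) * exp (1/2) = exp 1) by (rewrite <- exp_plus; f_equal; lra).
  pose proof exp_le_3. pose proof (exp_pos (1/2)).
  assert (exp (1/2) < 2) by nra.
  rewrite <- (ln_exp (1/2)). left. apply ln_increasing; lra.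
Qed.

Lemma beta_big (k : nat) beta : (512 <= k)%nat -> beta >= INR k * ln 2 - 10 * ln (INR k) -> beta >= 100.
Proof.
  intros Hk Hb.
  assert (Hk' : 512 <= INR k).
  { apply le_INR in Hk. rewrite INR_IZR_INZ in Hk. simpl in Hk. exact Hk. }
  pose proof ln2_half as L.
  assert (Hln : ln (INR k) <= INR k / 512 - 1 + 9 * ln 2).
  { replace (INR k) with (2 ^ 9 * (INR k / 512)) at 1 by (simpl; field).
    rewrite ln_mult by (apply pow_lt || apply Rdiv_lt_0_compat; lra).
    rewrite ln_pow by lra.
    pose proof (exp_ineq1_le (ln (INR k / 512))). rewrite exp_ln in H by (apply Rdiv_lt_0_compat; lra).
    simpl INR. lra. }
  nra.
Qed.

Theorem lemma3p5 :
  exists k0 : nat, forall k : nat, (k0 <= k)%nat ->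
  forall beta : R, beta >= INR k * ln 2 - 10 * ln (INR k) ->
  forall (sign : nat -> bool) (nu : nat -> R),
  (forall y, (y < k)%nat -> 0 <= nu y <= 1) ->
  forall x : nat, (x < k)%nat ->
  let ratio := hatnu beta k sign nu x true / hatnu beta k sign nu x false in
  (* (a) *)
  (exp (- beta) <= ratio <= exp beta) /\
  (* (b) *)
  (sign x = true -> ratio >= 1) /\
  (* (c) *)
  ((sign x = true /\ (forall y, (y < k)%nat -> y <> x -> sign y = false)) ->
   (forall y, (y < k)%nat -> sign y = false -> good k beta nu y) ->
   ratio >= exp (99 / 100 * beta)) /\
  (* (d) *)
  (forall p : nat, (1 <= p)%nat -> (p <= n_good_pos k beta sign nu x)%nat ->
   ratio >= exp (- exp (- (INR p * INR k * beta / 3)))).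
Proof.
  exists 512%nat. intros k Hk beta Hb sign nu Hnu x Hx ratio.
  pose proof (beta_big k beta Hk Hb) as Hb100.
  assert (Hk' : 512 <= INR k).
  { apply le_INR in Hk. rewrite INR_IZR_INZ in Hk. simpl in Hk. exact Hk. }
  set (e := exp (- beta)).
  assert (He : 0 < e < 1).
  { split; [apply exp_pos|]. unfold e. rewrite <- exp_0. apply exp_increasing. lra. }
  set (Q := Qv k sign nu x).
  assert (HQ : 0 <= Q <= 1).
  { apply prod01. intros y Hy. apply in_seq in Hy.
    destruct (Nat.eqb y x); [lra|]. specialize (Hnu y ltac:(lia)). unfold msg.
    destruct (negb (sign y)); lra. }
  pose proof (num_formula beta k sign nu x true Hx) as Nt.
  pose proof (num_formula beta k sign nu x false Hx) as Nf.
  fold e Q in Nt, Nf.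
  assert (Hratio : ratio = hatnu_num beta k sign nu x true / hatnu_num beta k sign nu x false).
  { unfold ratio, hatnu. rewrite den_formula.
    assert (0 < hatnu_num beta k sign nu x true) by
      (rewrite Nt; destruct (sign x); simpl; nra).
    assert (0 < hatnu_num beta k sign nu x false) by
      (rewrite Nf; destruct (sign x); simpl; nra).
    field. split; lra. }
  clearbody ratio. subst ratio.
  destruct (sign x) eqn:Hsx; simpl in Nt, Nf; rewrite Nt, Nf.
  - (* sign x = true: ratio = 1 / (1 - c Q) *)
    assert (Hpos : 0 < 1 - (1 - e) * (1 * Q)) by nra.
    assert (Hge1 : (1 - (1 - e) * (0 * Q)) / (1 - (1 - e) * (1 * Q)) >= 1).
    { apply Rle_ge. replace (1 - (1 - e) * (0 * Q)) with 1 by ring.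
      unfold Rdiv. rewrite Rmult_1_l, <- Rinv_1. apply Rinv_le_contravar; nra. }
    split; [|split; [intros _; exact Hge1|split]].
    + split; [lra|].
      replace (1 - (1 - e) * (0 * Q)) with 1 by ring.
      assert (Hee : exp beta * e = 1) by (unfold e; rewrite <- exp_plus; replace (beta + - beta) with 0 by ring; apply exp_0).
      apply (Rmult_le_reg_r (1 - (1 - e) * (1 * Q))); [lra|].
      unfold Rdiv. rewrite Rmult_assoc, Rinv_l by lra.
      pose proof (exp_pos beta). nra.
    + intros [_ Hneg] Hgood.
      set (eps := exp (- (INR k * beta / 2))).
      assert (Hbern : 1 - Q <= INR k * eps).
      { pose proof (prod_bern (fun y => if Nat.eqb y x then 1 else msg nu y (negb (sign y))) (seq 0 k) eps) as B.
        rewrite length_seq in B. apply B. intros y Hy. apply in_seq in Hy.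
        assert (0 < eps) by apply exp_pos.
        destruct (Nat.eqb_spec y x); [lra|].
        rewrite (Hneg y ltac:(lia) n). simpl. specialize (Hnu y ltac:(lia)).
        specialize (Hgood y ltac:(lia) (Hneg y ltac:(lia) n)). unfold good in Hgood. fold eps in Hgood. lra. }
      replace (1 - (1 - e) * (0 * Q)) with 1 by ring.
      apply Rle_ge. apply (Rmult_le_reg_r (1 - (1 - e) * (1 * Q))); [lra|].
      replace (1 / (1 - (1 - e) * (1 * Q)) * (1 - (1 - e) * (1 * Q))) with 1 by (field; lra).
      assert (H1 : exp (99/100*beta) * e <= 1/2).
      { unfold e. rewrite <- exp_plus.
        pose proof (exp_ineq1_le (beta/100 - 1)).
        assert (exp (99 / 100 * beta + - beta) * exp (beta/100) = 1).
        { rewrite <- exp_plus. replace (99 / 100 * beta + - beta + beta / 100) with 0 by field. apply exp_0. }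
        pose proof (exp_pos (99 / 100 * beta + - beta)).
        assert (exp (beta/100) = exp (beta/100 - 1) * exp 1) by (rewrite <- exp_plus; f_equal; ring).
        pose proof (exp_ineq1_le 1). pose proof (exp_pos (beta/100 - 1)).
        assert (exp (beta/100) >= 2) by nra. nra. }
      assert (H2 : exp (99/100*beta) * (INR k * eps) <= 1/2).
      { unfold eps. set (t := (INR k / 2 - 99/100) * beta).
        assert (exp (99 / 100 * beta) * exp (- (INR k * beta / 2)) * exp t = 1).
        { rewrite <- !exp_plus. unfold t. rewrite <- exp_0. f_equal. field. }
        pose proof (exp_ineq1_le t).
        assert (t >= 50 * INR k - 100) by (unfold t; nra).
        pose proof (exp_pos (99 / 100 * beta)). pose proof (exp_pos (- (INR k * beta / 2))).
        nra. }
      pose proof (exp_pos (99/100*beta)). nra.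
    + intros p _ _. eapply Rge_trans; [exact Hge1|].
      apply Rle_ge. rewrite <- exp_0. apply exp_le_3 || (apply Rlt_le; apply exp_increasing; pose proof (exp_pos (- (INR p * INR k * beta / 3))); lra).
  - (* sign x = false: ratio = 1 - c Q *)
    replace ((1 - (1 - e) * (1 * Q)) / (1 - (1 - e) * (0 * Q))) with (1 - (1 - e) * Q) by (field; lra).
    split; [|split; [intros H; discriminate|split]].
    + assert (1 <= exp beta) by (rewrite <- exp_0; apply Rlt_le, exp_increasing; lra). split; nra.
    + intros [H _]; discriminate.
    + intros p Hp1 Hpn.
      set (eps := exp (- (INR k * beta / 2))).
      assert (Heps : 0 <= eps <= 1).
      { split; [left; apply exp_pos|]. unfold eps. rewrite <- exp_0. left. apply exp_increasing. nra. }
      assert (HQp : Q <= eps ^ p).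
      { eapply Rle_trans.
        - apply (prod_pow _ (fun y => andb (andb (negb (Nat.eqb y x)) (sign y)) (goodb k beta nu y)) _ eps Heps).
          + intros y Hy. apply in_seq in Hy.
            destruct (Nat.eqb y x); [lra|]. specialize (Hnu y ltac:(lia)). unfold msg.
            destruct (negb (sign y)); lra.
          + intros y Hy HP. apply andb_prop in HP as [HP Hg]. apply andb_prop in HP as [Hne Hsy].
            destruct (Nat.eqb y x); [discriminate|]. rewrite Hsy. simpl.
            unfold goodb in Hg. destruct (Rle_dec _ _) in Hg; [|discriminate]. fold eps in r. lra.
        - apply pow_mono_le; [exact Heps| exact Hpn]. }
      unfold eps in HQp. rewrite exp_pow' in HQp.
      set (v := exp (- (INR p * INR k * beta / 6))).
      assert (Hv3 : v ^ 3 = exp (INR p * - (INR k * beta / 2))).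
      { unfold v. rewrite exp_pow'. f_equal. simpl. field. }
      assert (Hv2 : v ^ 2 = exp (- (INR p * INR k * beta / 3))).
      { unfold v. rewrite exp_pow'. f_equal. simpl. field. }
      rewrite <- Hv2. rewrite <- Hv3 in HQp.
      assert (Hp : 1 <= INR p) by (apply (le_INR 1%nat) in Hp1; simpl in Hp1; exact Hp1).
      assert (Hv : 0 < v <= 1/2).
      { split; [apply exp_pos|]. unfold v.
        pose proof (exp_ineq1_le (INR p * INR k * beta / 6 - 1)).
        assert (exp (- (INR p * INR k * beta / 6)) * exp (INR p * INR k * beta / 6 - 1) * exp 1 = 1).
        { rewrite <- !exp_plus. replace (- (INR p * INR k * beta / 6) + (INR p * INR k * beta / 6 - 1) + 1) with 0 by ring. apply exp_0. }
        pose proof (exp_ineq1_le 1).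
        assert (INR p * INR k >= 512) by nra. assert (INR p * INR k * beta / 6 - 1 >= 0) by nra.
        pose proof (exp_pos (- (INR p * INR k * beta / 6))).
        pose proof (exp_pos (INR p * INR k * beta / 6 - 1)). assert (exp (INR p * INR k * beta / 6 - 1) * exp 1 >= 2) by nra. nra. }
      assert (Hx2 : exp (- v ^ 2) * exp (v ^ 2) = 1).
      { rewrite <- exp_plus. replace (- v ^ 2 + v ^ 2) with 0 by ring. apply exp_0. }
      pose proof (exp_ineq1_le (v ^ 2)). pose proof (exp_pos (- v ^ 2)).
      apply Rle_ge.
      assert (Hkey : (1 - v ^ 3) * (1 + v ^ 2) >= 1).
      { assert (Hw : v * v * v <= 1/8) by (assert (v*v <= 1/4) by nra; nra). assert (1 - v - v*v*v >= 0) by lra. assert (v*v*(1 - v - v*v*v) >= 0) by (apply Rle_ge, Rmult_le_pos; nra). simpl. nra. }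
      assert (1 - (1 - e) * Q >= 1 - v ^ 3) by nra.
      assert (0 < 1 - v ^ 3) by (simpl; nra).
      nra.
Qed.
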